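(* Let $k_1,k_2,k_3\ge1$, let $G$ be the grid graph on $\{0,\dots,k_1\}\times\{0,\dots,k_2\}\times\{0,\dots,k_3\}$ (adjacency: differing by $1$ in exactly one coordinate), let $\mathcal B=\{B_1,\dots,B_m\}$ with $B_i=[a_i',a_i'']\times[b_i',b_i'']\times[c_i',c_i'']\subseteq\mathbb R^3$ boxes with integer endpoints $0\le a_i'<a_i''\le k_1$, $0\le b_i'<b_i''\le k_2$, $0\le c_i'<c_i''\le k_3$, and let $G_i$ be the subgraph of $G$ induced by the vertices in $B_i$. Let $\widetilde G$ be the graph with vertex set $V(G)\cup\{(u,i):1\le i\le m,\ u\in V(G_i)\}$ and edges: all edges of $G$; the edges $(u,i)(w,i)$ for $uw$ an edge of $G_i$; and the edges $u\,(u,i)$ for $u\in V(G_i)$. Let $\alpha=(0,0,0)$ and let $\omega=\omega(\mathcal B)$ be the maximum number of pairwise intersecting boxes of $\mathcal B$. Then every vertex of the pointed median graph $\widetilde G_\alpha$ has out-degree at most $\omega+3$. In particular, the maximum degree of $\widetilde G$ is at most $\omega+6$ and the clique number of the pointed contact graph $\Gamma_\alpha(\widetilde G)$ is at most $\omega+3$.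
   Context: $\widetilde G$ is a median graph (connected, with $I(x,y)\cap I(y,z)\cap I(z,x)$ a single vertex for all $x,y,z$, where $I(u,v)$ is the set of vertices on shortest $u$–$v$ paths). The pointed median graph $\widetilde G_\alpha$ is $\widetilde G$ with each edge $xy$ directed from $x$ to $y$ iff $d(x,\alpha)<d(y,\alpha)$, $d$ the graph distance; the tail is the origin. The Djoković–Winkler relation $\Theta$: $xy\,\Theta\,zw$ iff $d(x,z)+d(y,w)\ne d(x,w)+d(y,z)$, an equivalence relation on edges of a median graph. Two $\Theta$-classes cross if some 4-cycle has two opposite edges in one and the other two in the other. The pointed contact graph $\Gamma_\alpha(\widetilde G)$ has the $\Theta$-classes as vertices, two distinct classes adjacent iff they cross or there exist edges, one from each class, which (directed as in $\widetilde G_\alpha$) have the same origin and lie in no common 4-cycle. *)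

(* Defs.v *)
From mathcomp Require Import all_boot all_order.
Set Implicit Arguments. Unset Strict Implicit. Unset Printing Implicit Defensive.

Section GraphNotions.
Variables (T : finType) (adj : rel T).

Fixpoint ball (x : T) (n : nat) : {set T} :=
  if n is n'.+1 then ball x n' :|: [set y | [exists z in ball x n', adj z y]]
  else [set x].

(* graph distance: least n with y within n steps of x (#|T| if unreachable) *)
Definition gdist (x y : T) : nat :=
  find (fun n => y \in ball x n) (iota 0 #|T|).

Definition is_edge (e : T * T) : bool := adj e.1 e.2.

Definition Theta (e f : T * T) : bool :=
  gdist e.1 f.1 + gdist e.2 f.2 != gdist e.1 f.2 + gdist e.2 f.1.

(* the Theta-class of an edge, as the set of (both orientations of) edges *)
Definition theta_class (e : T * T) : {set T * T} :=
  [set f | is_edge f && Theta e f].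

Definition is_theta_class (A : {set T * T}) : Prop :=
  exists2 e, is_edge e & A = theta_class e.

Definition cycle4 (v0 v1 v2 v3 : T) : bool :=
  [&& uniq [:: v0; v1; v2; v3], adj v0 v1, adj v1 v2, adj v2 v3 & adj v3 v0].

Definition on_cycle4 (e : T * T) (v0 v1 v2 v3 : T) : bool :=
  has (fun p : T * T => ((p.1 == e.1) && (p.2 == e.2)) || ((p.1 == e.2) && (p.2 == e.1)))
      [:: (v0, v1); (v1, v2); (v2, v3); (v3, v0)].

Definition classes_cross (A B : {set T * T}) : Prop :=
  exists v0 v1 v2 v3, [/\ cycle4 v0 v1 v2 v3,
    (v0, v1) \in A, (v2, v3) \in A, (v1, v2) \in B & (v3, v0) \in B].

Definition directed_from (alpha : T) (e : T * T) : bool :=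
  gdist e.1 alpha < gdist e.2 alpha.

Definition contact_adj (alpha : T) (A B : {set T * T}) : Prop :=
  classes_cross A B \/
  exists e f, [/\ (e \in A) && (f \in B), directed_from alpha e, directed_from alpha f,
     e.1 = f.1 &
     ~ exists v0 v1 v2 v3,
         [&& cycle4 v0 v1 v2 v3, on_cycle4 e v0 v1 v2 v3 & on_cycle4 f v0 v1 v2 v3]].

Definition contact_clique (alpha : T) (C : {set {set T * T}}) : Prop :=
  (forall A, A \in C -> is_theta_class A) /\
  (forall A B, A \in C -> B \in C -> A != B -> contact_adj alpha A B).

Definition out_degree (alpha x : T) : nat :=
  #|[set y | adj x y && (gdist x alpha < gdist y alpha)]|.

Definition degree (x : T) : nat := #|[set y | adj x y]|.

End GraphNotions.

Definition gridV (k1 k2 k3 : nat) : finType :=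
  ('I_k1.+1 * 'I_k2.+1 * 'I_k3.+1)%type.

Definition cx k1 k2 k3 (p : gridV k1 k2 k3) : nat := p.1.1.
Definition cy k1 k2 k3 (p : gridV k1 k2 k3) : nat := p.1.2.
Definition cz k1 k2 k3 (p : gridV k1 k2 k3) : nat := p.2.

Definition diff1 (u v : nat) : bool := (u == v.+1) || (v == u.+1).

Definition grid_adj k1 k2 k3 (p q : gridV k1 k2 k3) : bool :=
  [|| [&& diff1 (cx p) (cx q), cy p == cy q & cz p == cz q],
      [&& cx p == cx q, diff1 (cy p) (cy q) & cz p == cz q]
    | [&& cx p == cx q, cy p == cy q & diff1 (cz p) (cz q)]].

Record boxes (m : nat) := Boxes {
  a1 : 'I_m -> nat; a2 : 'I_m -> nat;
  b1 : 'I_m -> nat; b2 : 'I_m -> nat;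
  c1 : 'I_m -> nat; c2 : 'I_m -> nat }.

Definition boxes_ok k1 k2 k3 m (B : boxes m) : Prop :=
  forall i, [/\ a1 B i < a2 B i <= k1, b1 B i < b2 B i <= k2 & c1 B i < c2 B i <= k3].

Definition in_box k1 k2 k3 m (B : boxes m) (i : 'I_m) (p : gridV k1 k2 k3) : bool :=
  [&& a1 B i <= cx p <= a2 B i, b1 B i <= cy p <= b2 B i & c1 B i <= cz p <= c2 B i].

Definition intervals_meet (s t u v : nat) : bool := (s <= v) && (u <= t).

(* the closed boxes B_i and B_j (as subsets of R^3) intersect:
   a product of closed intervals meets another iff the intervals meet coordinatewise *)
Definition boxes_meet m (B : boxes m) (i j : 'I_m) : bool :=
  [&& intervals_meet (a1 B i) (a2 B i) (a1 B j) (a2 B j),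
      intervals_meet (b1 B i) (b2 B i) (b1 B j) (b2 B j) &
      intervals_meet (c1 B i) (c2 B i) (c1 B j) (c2 B j)].

Definition omega m (B : boxes m) : nat :=
  \max_(S : {set 'I_m} | [forall i in S, forall j in S, boxes_meet B i j]) #|S|.

(* vertices of G~ : (u, None) stands for u in V(G), (u, Some i) for (u,i) *)
Definition tV k1 k2 k3 m : finType := (gridV k1 k2 k3 * option 'I_m)%type.

Definition tvalid k1 k2 k3 m (B : boxes m) (v : tV k1 k2 k3 m) : bool :=
  if v.2 is Some i then in_box B i v.1 else true.

Definition tadj k1 k2 k3 m (B : boxes m) (u v : tV k1 k2 k3 m) : bool :=
  [&& tvalid B u, tvalid B v &
    match u.2, v.2 with
    | None, None => grid_adj u.1 v.1
    | Some i, Some j => (i == j) && grid_adj u.1 v.1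
    | None, Some _ => u.1 == v.1
    | Some _, None => u.1 == v.1
    end].

Definition alpha0 k1 k2 k3 m : tV k1 k2 k3 m := ((ord0, ord0, ord0), None).

(* Main.v *)
Require Import Defs.
From mathcomp Require Import all_boot all_order.
From mathcomp Require Import zify.
Set Implicit Arguments. Unset Strict Implicit. Unset Printing Implicit Defensive.

Lemma find_iota_eq (P : pred nat) s N n :
  s <= n < s + N -> P n -> (forall k, s <= k < n -> ~~ P k) ->
  find P (iota s N) = n - s.
Proof.
elim: N s => [|N IH] s /andP[sn nN] Pn Hk; first by lia.
rewrite /=; case: (ltngtP s n) => [lt|gt|eq]; last 1 first.
- by rewrite eq Pn subnn.
- have -> : P s = false by apply/negbTE/Hk; rewrite leqnn.
  rewrite (IH s.+1) //; [lia|lia|move=> k kk; apply: Hk; lia].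
- lia.
Qed.

Lemma ball_sub (T : finType) (adj : rel T) x n : ball adj x n \subset ball adj x n.+1.
Proof. by rewrite /= subsetUl. Qed.

Lemma ball_S (T : finType) (adj : rel T) x n :
  ball adj x n.+1 = ball adj x n :|: [set y | [exists z in ball adj x n, adj z y]].
Proof. by []. Qed.

Lemma ball_step (T : finType) (adj : rel T) x n y z :
  y \in ball adj x n -> adj y z -> z \in ball adj x n.+1.
Proof.
move=> yb yz; rewrite /= inE; apply/orP; right; rewrite inE.
by apply/existsP; exists y; rewrite yb yz.
Qed.

Lemma ball_prepend (T : finType) (adj : rel T) v z w n :
  adj v z -> w \in ball adj z n -> w \in ball adj v n.+1.
Proof.
move=> vz; elim: n w => [|n IH] w.
  rewrite /= inE => /eqP ->; apply: (@ball_step _ _ _ 0 v) vz; by rewrite /= inE.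
rewrite ball_S inE => /orP[wb|].
  by apply: (subsetP (ball_sub _ _ _)); apply: IH.
rewrite inE => /existsP[y /andP[yb yw]]; apply: ball_step yw; exact: IH.
Qed.
Section G.
Variables (k1 k2 k3 m : nat) (B : boxes m).
Local Notation V := (tV k1 k2 k3 m).
Local Notation adj := (@tadj k1 k2 k3 m B).

Definition dst (a b : nat) := (a - b) + (b - a).
Definition lc (l l' : option 'I_m) : nat := match l, l' with
  | None, None => 0 | Some i, Some j => if i == j then 0 else 2 | _, _ => 1 end.
Definition D (v w : V) : nat :=
  dst (cx v.1) (cx w.1) + dst (cy v.1) (cy w.1) + dst (cz v.1) (cz w.1) + lc v.2 w.2.

Definition ekey (e : V * V) : option 'I_m * (nat * nat) :=
  match e.1.2, e.2.2 with
  | Some i, None => (Some i, (0, 0))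
  | None, Some i => (Some i, (0, 0))
  | _, _ => if cx e.1.1 != cx e.2.1 then (None, (0, minn (cx e.1.1) (cx e.2.1)))
            else if cy e.1.1 != cy e.2.1 then (None, (1, minn (cy e.1.1) (cy e.2.1)))
            else (None, (2, minn (cz e.1.1) (cz e.2.1)))
  end.

Definition dif (a b : nat) : Prop := a = b.+1 \/ b = a.+1.

Lemma grid_cases : forall (u w : gridV k1 k2 k3) (l : option 'I_m), grid_adj u w ->
  let x := (u, l) in let y := (w, l) in
  [\/ [/\ x.2 = y.2, ekey (x, y) = (None, (0, minn (cx x.1) (cx y.1))),
         dif (cx x.1) (cx y.1), cy x.1 = cy y.1 & cz x.1 = cz y.1],
      [/\ x.2 = y.2, ekey (x, y) = (None, (1, minn (cy x.1) (cy y.1))),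
         cx x.1 = cx y.1, dif (cy x.1) (cy y.1) & cz x.1 = cz y.1],
      [/\ x.2 = y.2, ekey (x, y) = (None, (2, minn (cz x.1) (cz y.1))),
         cx x.1 = cx y.1, cy x.1 = cy y.1 & dif (cz x.1) (cz y.1)] |
      exists i, [/\ x.1 = y.1, (x.2 = None /\ y.2 = Some i) \/ (x.2 = Some i /\ y.2 = None)
                  & ekey (x, y) = (Some i, (0, 0))]].
Proof.
  move=> u w l; rewrite /grid_adj /diff1 /dif /=.
  case/or3P => /and3P[d1 d2 d3].
  - apply: Or41; split => //; try lia.
    by case: l => [i|]; rewrite /ekey /=; have -> : (cx u != cx w) = true by lia.
  - apply: Or42; split => //; try lia.
    case: l => [i|]; rewrite /ekey /=; have -> : (cx u != cx w) = false by lia.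
      by have -> : (cy u != cy w) = true by lia.
    by have -> : (cy u != cy w) = true by lia.
  - apply: Or43; split => //; try lia.
    case: l => [i|]; rewrite /ekey /=; (have -> : (cx u != cx w) = false by lia);
      by have -> : (cy u != cy w) = false by lia.
Qed.

Lemma edge_cases (x y : V) : adj x y -> [/\ tvalid B x, tvalid B y &
  [\/ [/\ x.2 = y.2, ekey (x, y) = (None, (0, minn (cx x.1) (cx y.1))),
         dif (cx x.1) (cx y.1), cy x.1 = cy y.1 & cz x.1 = cz y.1],
      [/\ x.2 = y.2, ekey (x, y) = (None, (1, minn (cy x.1) (cy y.1))),
         cx x.1 = cx y.1, dif (cy x.1) (cy y.1) & cz x.1 = cz y.1],
      [/\ x.2 = y.2, ekey (x, y) = (None, (2, minn (cz x.1) (cz y.1))),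
         cx x.1 = cx y.1, cy x.1 = cy y.1 & dif (cz x.1) (cz y.1)] |
      exists i, [/\ x.1 = y.1, (x.2 = None /\ y.2 = Some i) \/ (x.2 = Some i /\ y.2 = None)
                  & ekey (x, y) = (Some i, (0, 0))]]].
Proof.
case: x => u l; case: y => w l'.
rewrite /tadj /= => /and3P[vx vy H]; split => //.
case: l vx H => [i|] vx; case: l' vy => [j|] vy /=.
- by case/andP => /eqP <-; apply: grid_cases.
- move/eqP => <-; apply: Or44; exists i; split => //; by right.
- move/eqP => <-; apply: Or44; exists j; split => //; by left.
- by apply: grid_cases.
Qed.

Lemma eq_grid (p q : gridV k1 k2 k3) :
  cx p = cx q -> cy p = cy q -> cz p = cz q -> p = q.
Proof.
case: p => [[a b] c]; case: q => [[a' b'] c'].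
by rewrite /cx /cy /cz /= => /val_inj -> /val_inj -> /val_inj ->.
Qed.

Lemma cx_le (p : gridV k1 k2 k3) : cx p <= k1.
Proof. by rewrite /cx -ltnS. Qed.
Lemma cy_le (p : gridV k1 k2 k3) : cy p <= k2.
Proof. by rewrite /cy -ltnS. Qed.
Lemma cz_le (p : gridV k1 k2 k3) : cz p <= k3.
Proof. by rewrite /cz -ltnS. Qed.

Lemma lc_refl l : lc l l = 0.
Proof. by case: l => [i|] //=; rewrite eqxx. Qed.

Lemma D_refl v : D v v = 0.
Proof. rewrite /D lc_refl /dst !subnn. by []. Qed.

Lemma lc0 l l' : lc l l' = 0 -> l = l'.
Proof. by case: l => [i|]; case: l' => [j|] //=; case: eqVneq => // ->. Qed.

Lemma D0 v w : D v w = 0 -> v = w.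
Proof.
case: v => u l; case: w => w l'; rewrite /D /dst /= => H.
have -> : u = w by apply: eq_grid; lia.
have -> // : l = l' by apply: lc0; lia.
Qed.

Lemma D_edge v y z : adj y z -> D v z <= D v y + 1.
Proof.
move=> /edge_cases[_ _ [[E _ d e1 e2]|[E _ e1 d e2]|[E _ e1 e2 d]|[i [E1 E2 _]]]];
  rewrite /D ?E ?e1 ?e2 ?E1 /dst; try (rewrite /dif in d; lia).
case: E2 => [[-> ->]|[-> ->]]; case: (v.2) => [j|] /=; try case: eqP; lia.
Qed.

Lemma ball_lb v n z : z \in ball adj v n -> D v z <= n.
Proof.
elim: n z => [|n IH] z.
  by rewrite /= inE => /eqP ->; rewrite D_refl.
rewrite ball_S inE => /orP[/IH|]; first lia.
rewrite inE => /existsP[y /andP[/IH yb yz]]; have := D_edge v yz; lia.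
Qed.

Definition stp (a b : nat) := if a < b then a.+1 else a.-1.

Lemma stp_spec a b : a != b -> (a < b /\ stp a b = a.+1) \/ (b < a /\ stp a b = a.-1).
Proof. rewrite /stp; case: ltnP => h ne; [left|right]; lia. Qed.

Definition gd (p q : gridV k1 k2 k3) :=
  dst (cx p) (cx q) + dst (cy p) (cy q) + dst (cz p) (cz q).

Definition mv (p q : gridV k1 k2 k3) : gridV k1 k2 k3 :=
  if cx p != cx q then (inord (stp (cx p) (cx q)), p.1.2, p.2)
  else if cy p != cy q then (p.1.1, inord (stp (cy p) (cy q)), p.2)
  else (p.1.1, p.1.2, inord (stp (cz p) (cz q))).

Lemma mv_spec p q : 0 < gd p q -> [/\ grid_adj p (mv p q), gd (mv p q) q = (gd p q).-1 &
  forall i, in_box B i p -> in_box B i q -> in_box B i (mv p q)].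
Proof.
rewrite /mv /gd /dst /grid_adj /diff1 /in_box => H.
have b1 := cx_le p; have b2 := cx_le q; have b3 := cy_le p; have b4 := cy_le q;
have b5 := cz_le p; have b6 := cz_le q.
case: ifP => hx.
  have [[h1 h2]|[h1 h2]] := stp_spec hx;
  (have e : cx ((inord (stp (cx p) (cx q)) : 'I_k1.+1), p.1.2, p.2) = stp (cx p) (cx q)
    by rewrite {1}/cx /= inordK; lia);
  rewrite e h2 /cy /cz /=; split; try lia.
case: ifP => hy.
  have [[h1 h2]|[h1 h2]] := stp_spec hy;
  (have e : cy (p.1.1, (inord (stp (cy p) (cy q)) : 'I_k2.+1), p.2) = stp (cy p) (cy q)
    by rewrite {1}/cy /= inordK; lia);
  rewrite e h2 /cx /cz /=; split; try lia.
have hz : cz p != cz q by lia.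
have [[h1 h2]|[h1 h2]] := stp_spec hz;
(have e : cz (p.1.1, p.1.2, (inord (stp (cz p) (cz q)) : 'I_k3.+1)) = stp (cz p) (cz q)
  by rewrite {1}/cz /= inordK; lia);
rewrite e h2 /cx /cy /=; split; try lia.
Qed.

Lemma gd0 u w : gd u w = 0 -> u = w.
Proof. rewrite /gd /dst => H; apply: eq_grid; lia. Qed.

Lemma DE v w : D v w = gd v.1 w.1 + lc v.2 w.2.
Proof. by []. Qed.

Lemma ball_ub n : forall v w : V, tvalid B v -> tvalid B w -> D v w = n ->
  w \in ball adj v n.
Proof.
elim: n => [|n IH] v w vv vw.
  by move=> /D0 ->; rewrite /= inE.
move=> Dn.
suff [z [vz zv Dz]] : exists z, [/\ adj v z, tvalid B z & D z w = n].
  exact: ball_prepend vz (IH _ _ zv vw Dz).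
case: v vv Dn => u l vv Dn; case: w vw Dn => w l' vw Dn.
case: l vv Dn => [i|] vv Dn.
- case: (eqVneq l' (Some i)) => [El|ne].
  + subst l'.
    have gpos : 0 < gd u w by move: Dn; rewrite /D /= eqxx /gd; lia.
    have [ga gdE ib] := mv_spec gpos.
    have vz : tvalid B (mv u w, Some i) by apply: ib.
    exists (mv u w, Some i); split => //.
      by rewrite /tadj vv vz /= eqxx ga.
    by move: Dn; rewrite /D /= eqxx; rewrite /gd in gdE; lia.
  + exists (u, None); split => //.
      by rewrite /tadj /= vv eqxx.
    move: Dn ne; rewrite /D /=; case: l' vw => [j|] /= vw Dn ne; last lia.
    have nij : (i == j) = false by apply/eqP => e; move: ne; rewrite e eqxx.
    move: Dn; rewrite nij; lia.
- case: (eqVneq (gd u w) 0) => g0.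
  + have uw := gd0 g0; subst w.
    case: l' vw Dn => [j|] vw Dn; last by move: Dn; rewrite /D /= /dst !subnn.
    exists (u, Some j); split => //.
      by rewrite /tadj /= vw eqxx.
    rewrite D_refl; move: Dn; rewrite /D /= /dst !subnn; lia.
  + have gpos : 0 < gd u w by lia.
    have [ga gdE ib] := mv_spec gpos.
    exists (mv u w, None); split => //.
    by move: Dn; rewrite !DE gdE /=; lia.
Qed.

Lemma lc_bound (l l' : option 'I_m) : lc l l' <= 2 /\ (0 < lc l l' -> 0 < m).
Proof.
case: l => [i|]; case: l' => [j|] /=; try case: eqP; split => //;
  try (move=> _; exact: leq_ltn_trans (leq0n _) (ltn_ord _)).
Qed.

Lemma card_V : #|V| = k1.+1 * k2.+1 * k3.+1 * m.+1.
Proof. by rewrite /tV /gridV !card_prod card_option !card_ord. Qed.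

Lemma D_lt v w : 1 <= k1 -> 1 <= k2 -> D v w < #|V|.
Proof.
move=> h1 h2; rewrite card_V /D /dst.
have := cx_le v.1; have := cx_le w.1; have := cy_le v.1; have := cy_le w.1;
have := cz_le v.1; have := cz_le w.1; have [] := lc_bound v.2 w.2.
move: (lc v.2 w.2) => c c2 cm b1 b2 b3 b4 b5 b6.
case: (posnP m) => [m0|mpos].
  have c0 : c = 0 by case: (posnP c) => // /cm; rewrite m0.
  rewrite c0; nia.
nia.
Qed.

Lemma gdist_D v w : 1 <= k1 -> 1 <= k2 -> tvalid B v -> tvalid B w ->
  gdist adj v w = D v w.
Proof.
move=> h1 h2 vv vw; rewrite /gdist (@find_iota_eq _ _ _ (D v w)) ?subn0 //.
- by rewrite add0n D_lt.
- exact: ball_ub.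
- by move=> k /andP[_ kD]; apply/negP => /ball_lb; lia.
Qed.
End G.

Section H.
Variables (k1 k2 k3 m : nat) (B : boxes m).
Local Notation V := (tV k1 k2 k3 m).
Local Notation adj := (@tadj k1 k2 k3 m B).

Definition co (k : nat) (p : gridV k1 k2 k3) : nat :=
  match k with 0 => cx p | 1 => cy p | _ => cz p end.

Definition sideP (kk : option 'I_m * (nat * nat)) (z : V) : bool :=
  match kk with (Some i, _) => z.2 == Some i | (None, (k, t)) => co k z.1 <= t end.

Lemma noneS (i : 'I_m) : (None == Some i) = false.
Proof. by []. Qed.

Lemma D_diff1 (x y z : V) : adj x y -> (D x z == (D y z).+1) || (D y z == (D x z).+1).
Proof.
move=> /edge_cases[_ _ Hx]; rewrite !DE.
case: Hx => [[Ex Kx dx ex1 ex2]|[Ex Kx ex1 dx ex2]|[Ex Kx ex1 ex2 dx]|[i [Ex [[Lx Ly]|[Lx Ly]] Kx]]].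
- rewrite /gd Ex ex1 ex2; move: (dst (cy y.1) (cy z.1)) (dst (cz y.1) (cz z.1)) (lc y.2 z.2) => r1 r2 r3.
  rewrite /dst; rewrite /dif in dx; lia.
- rewrite /gd Ex ex1 ex2; move: (dst (cx y.1) (cx z.1)) (dst (cz y.1) (cz z.1)) (lc y.2 z.2) => r1 r2 r3.
  rewrite /dst; rewrite /dif in dx; lia.
- rewrite /gd Ex ex1 ex2; move: (dst (cx y.1) (cx z.1)) (dst (cy y.1) (cy z.1)) (lc y.2 z.2) => r1 r2 r3.
  rewrite /dst; rewrite /dif in dx; lia.
- rewrite Ex Lx Ly ?noneS; move: (gd y.1 z.1) => r.
  case: (z.2) => [j|] /=; try case: (i == j); lia.
- rewrite Ex Lx Ly ?noneS; move: (gd y.1 z.1) => r.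
  case: (z.2) => [j|] /=; try case: (i == j); lia.
Qed.

Lemma D_side (x y z : V) : adj x y ->
  (D x z < D y z) = (sideP (ekey (x, y)) z == sideP (ekey (x, y)) x).
Proof.
move=> /edge_cases[_ _ Hx]; rewrite !DE.
case: Hx => [[Ex Kx dx ex1 ex2]|[Ex Kx ex1 dx ex2]|[Ex Kx ex1 ex2 dx]|[i [Ex [[Lx Ly]|[Lx Ly]] Kx]]];
  rewrite Kx /sideP /co /=.
- rewrite /gd Ex ex1 ex2; move: (dst (cy y.1) (cy z.1)) (dst (cz y.1) (cz z.1)) (lc y.2 z.2) => r1 r2 r3.
  rewrite /dst; rewrite /dif in dx; move: (cx x.1) (cx y.1) (cx z.1) dx => a b c dx; case: dx => dx.
    by rewrite (_ : (a <= minn a b) = false); [rewrite eqbF_neg; lia|lia].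
  by rewrite (_ : (a <= minn a b) = true); [rewrite eqb_id; lia|lia].
- rewrite /gd Ex ex1 ex2; move: (dst (cx y.1) (cx z.1)) (dst (cz y.1) (cz z.1)) (lc y.2 z.2) => r1 r2 r3.
  rewrite /dst; rewrite /dif in dx; move: (cy x.1) (cy y.1) (cy z.1) dx => a b c dx; case: dx => dx.
    by rewrite (_ : (a <= minn a b) = false); [rewrite eqbF_neg; lia|lia].
  by rewrite (_ : (a <= minn a b) = true); [rewrite eqb_id; lia|lia].
- rewrite /gd Ex ex1 ex2; move: (dst (cx y.1) (cx z.1)) (dst (cy y.1) (cy z.1)) (lc y.2 z.2) => r1 r2 r3.
  rewrite /dst; rewrite /dif in dx; move: (cz x.1) (cz y.1) (cz z.1) dx => a b c dx; case: dx => dx.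
    by rewrite (_ : (a <= minn a b) = false); [rewrite eqbF_neg; lia|lia].
  by rewrite (_ : (a <= minn a b) = true); [rewrite eqb_id; lia|lia].
- rewrite Ex Lx Ly ?noneS; move: (gd y.1 z.1) => r.
  case: (z.2) => [j|] /=; last by rewrite ?noneS; lia.
  case: (eqVneq i j) => [<-|ne]; first by rewrite !eqxx ?noneS /=; lia.
  have nji : (Some j == Some i) = false by apply/eqP; case=> e; move: ne; rewrite e eqxx.
  by rewrite ?(negbTE ne) ?nji ?noneS /=; lia.
- rewrite Ex Lx Ly eqxx eqb_id; move: (gd y.1 z.1) => r.
  case: (z.2) => [j|] /=; last by rewrite ?noneS; lia.
  case: (eqVneq i j) => [<-|ne]; first by rewrite !eqxx ?noneS /=; lia.
  have nji : (Some j == Some i) = false by apply/eqP; case=> e; move: ne; rewrite e eqxx.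
  by rewrite ?(negbTE ne) ?nji ?noneS /=; lia.
Qed.

Lemma Theta_side (x y p q : V) : 1 <= k1 -> 1 <= k2 -> adj x y -> adj p q ->
  Theta adj (x, y) (p, q) = (sideP (ekey (x, y)) p != sideP (ekey (x, y)) q).
Proof.
move=> h1 h2 exy epq; have [vx vy _] := edge_cases exy; have [vp vq _] := edge_cases epq.
rewrite /Theta /= !gdist_D //.
have Sp := D_side p exy; have Sq := D_side q exy.
have Dp := D_diff1 p exy; have Dq := D_diff1 q exy.
move: Sp Sq Dp Dq; case: (sideP _ p); case: (sideP _ q); case: (sideP _ x) => /= Sp Sq Dp Dq; lia.
Qed.

Lemma noneN : (None == None :> option 'I_m) = true.
Proof. by []. Qed.
Lemma someN (i : 'I_m) : (Some i == None) = false.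
Proof. by []. Qed.

Ltac gen := repeat match goal with
  | |- context [cx ?z] => let a := fresh "a" in set (a := cx z) in *; clearbody a
  | |- context [cy ?z] => let a := fresh "a" in set (a := cy z) in *; clearbody a
  | |- context [cz ?z] => let a := fresh "a" in set (a := cz z) in *; clearbody a
  end.

Ltac gen2 := repeat match goal with
  | |- context [cx ?z] => let a := fresh "a" in move: (cx z) => a
  | |- context [cy ?z] => let a := fresh "a" in move: (cy z) => a
  | |- context [cz ?z] => let a := fresh "a" in move: (cz z) => a
  end.

Lemma neq_leq a b t : ((a <= t) != (b <= t)) = ((a <= t) && ~~(b <= t) || ~~(a<=t) && (b <= t)).
Proof. by case: (a <= t); case: (b <= t). Qed.

Lemma sideP_key (p q : V) kk : adj p q -> (kk.1 = None -> kk.2.1 < 3) ->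
  (forall i, kk.1 = Some i -> kk.2 = (0, 0)) ->
  (sideP kk p != sideP kk q) = (ekey (p, q) == kk).
Proof.
move=> /edge_cases[_ _ Hp]; case: kk => [[i|] [k t]] /= H1 H2.
  case: (H2 i erefl) => -> ->.
  case: Hp => [[Ep Kp dp ep1 ep2]|[Ep Kp ep1 dp ep2]|[Ep Kp ep1 ep2 dp]|[j [Ep [[Lp Lq]|[Lp Lq]] Kp]]];
  rewrite /sideP Kp ?Ep ?Lp ?Lq ?eqxx !xpair_eqE ?noneS ?someN //=;
  by case: (Some j == Some i).
move: (H1 erefl) => {H1 H2}; case: k => [|[|[|k]]] // _;
case: Hp => [[Ep Kp dp ep1 ep2]|[Ep Kp ep1 dp ep2]|[Ep Kp ep1 ep2 dp]|[j [Ep [[Lp Lq]|[Lp Lq]] Kp]]];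
  rewrite /sideP /co Kp ?Ep ?Lp ?Lq ?eqxx !xpair_eqE ?noneS ?someN ?noneN /=;
  (try rewrite /dif in dp); rewrite ?neq_leq; clear Kp; (try move: dp); (try move: ep1); (try move: ep2); gen2; lia.
Show.
Show.
Qed.

Lemma ekey_wf x y : adj x y -> ((ekey (x, y)).1 = None -> (ekey (x, y)).2.1 < 3) /\
  (forall i, (ekey (x, y)).1 = Some i -> (ekey (x, y)).2 = (0, 0)).
Proof.
move=> /edge_cases[_ _ H].
by case: H => [[_ K _ _ _]|[_ K _ _ _]|[_ K _ _ _]|[i [_ _ K]]]; rewrite K; split.
Qed.

Lemma Theta_key x y p q : 1 <= k1 -> 1 <= k2 -> adj x y -> adj p q ->
  Theta adj (x, y) (p, q) = (ekey (p, q) == ekey (x, y)).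
Proof.
move=> h1 h2 exy epq; rewrite Theta_side //; have [H1 H2] := ekey_wf exy.
exact: sideP_key.
Qed.

Lemma mem_class e f : 1 <= k1 -> 1 <= k2 -> is_edge adj e ->
  (f \in theta_class adj e) = is_edge adj f && (ekey f == ekey e).
Proof.
case: e => x y; case: f => p q; rewrite /theta_class inE /is_edge /= => h1 h2 exy.
case epq: (adj p q) => //=; exact: Theta_key.
Qed.

Lemma key_level g k t : is_edge adj g -> ekey g = (None, (k, t)) ->
  k < 3 /\ ((co k g.1.1 = t /\ co k g.2.1 = t.+1) \/ (co k g.1.1 = t.+1 /\ co k g.2.1 = t)).
Proof.
case: g => x y; rewrite /is_edge /= => /edge_cases[_ _ H].
case: H => [[Ex Kx dx ex1 ex2]|[Ex Kx ex1 dx ex2]|[Ex Kx ex1 ex2 dx]|[i [Ex _ Kx]]];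
  rewrite Kx // => -[<- <-]; rewrite /co /dif in dx *; move: dx; gen2; lia.
Qed.

Definition alpha := alpha0 k1 k2 k3 m.

Lemma D_alpha v : D v alpha = cx v.1 + cy v.1 + cz v.1 + (v.2 != None).
Proof.
rewrite /D /dst (_ : cx alpha.1 = 0) // (_ : cy alpha.1 = 0) // (_ : cz alpha.1 = 0) //.
by case: (v.2) => [i|] /=; lia.
Qed.

Lemma key_level_dir g k t : 1 <= k1 -> 1 <= k2 -> is_edge adj g ->
  directed_from adj alpha g -> ekey g = (None, (k, t)) -> co k g.1.1 = t.
Proof.
case: g => x y h1 h2; rewrite /is_edge /directed_from /= => exy.
have [vx vy H] := edge_cases exy; rewrite !gdist_D // !D_alpha.
case: H => [[Ex Kx dx ex1 ex2]|[Ex Kx ex1 dx ex2]|[Ex Kx ex1 ex2 dx]|[i [Ex _ Kx]]];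
  rewrite Kx // ?Ex => Hd -[<- <-]; rewrite /co /dif in dx *; move: dx Hd ex1 ex2;
  move: (y.2 != None) => b; gen2; lia.
Qed.

Lemma key_box g i : is_edge adj g -> (ekey g).1 = Some i ->
  g.1.1 = g.2.1 /\ ((g.1.2 = None /\ g.2.2 = Some i) \/ (g.1.2 = Some i /\ g.2.2 = None)).
Proof.
case: g => x y; rewrite /is_edge /= => /edge_cases[_ _ H].
by case: H => [[_ Kx _ _ _]|[_ Kx _ _ _]|[_ Kx _ _ _]|[j [Ex Lx Kx]]]; rewrite Kx //= => -[<-].
Qed.

Lemma key_box_dir g i : 1 <= k1 -> 1 <= k2 -> is_edge adj g ->
  directed_from adj alpha g -> (ekey g).1 = Some i ->
  [/\ g.1.1 = g.2.1, g.1.2 = None & g.2.2 = Some i].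
Proof.
move=> h1 h2 eg dg /(key_box eg) [E [[L1 L2]|[L1 L2]]] //.
move: dg eg; case: g E L1 L2 => x y /= E L1 L2; rewrite /directed_from /is_edge /= => dg exy.
have [vx vy _] := edge_cases exy.
move: dg; rewrite !gdist_D // !D_alpha E L1 L2 /=; lia.
Qed.

Lemma omega_ge (u : gridV k1 k2 k3) : #|[set i | in_box B i u]| <= omega B.
Proof.
rewrite /omega; apply: (leq_bigmax_cond (F := fun S : {set 'I_m} => #|S|)).
apply/forallP => i; apply/implyP; rewrite inE => hi.
apply/forallP => j; apply/implyP; rewrite inE => hj.
move: hi hj; rewrite /boxes_meet /intervals_meet /in_box; lia.
Qed.

Definition g3 (x y : V) : nat := (cx x.1 == cx y.1) + ((cx x.1 == cx y.1) && (cy x.1 == cy y.1)).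
Definition dir (x y : V) : bool := cx x.1 + cy x.1 + cz x.1 < cx y.1 + cy y.1 + cz y.1.

Lemma same_label_nb x y : adj x y -> y.2 = x.2 ->
  [\/ [/\ dif (cx x.1) (cx y.1), cy x.1 = cy y.1 & cz x.1 = cz y.1],
      [/\ cx x.1 = cx y.1, dif (cy x.1) (cy y.1) & cz x.1 = cz y.1] |
      [/\ cx x.1 = cx y.1, cy x.1 = cy y.1 & dif (cz x.1) (cz y.1)]].
Proof.
move=> /edge_cases[_ _ H] E.
case: H => [[_ _ d e1 e2]|[_ _ e1 d e2]|[_ _ e1 e2 d]|[i [_ [[L1 L2]|[L1 L2]] _]]].
- by apply: Or31.
- by apply: Or32.
- by apply: Or33.
- by move: E; rewrite L1 L2.
- by move: E; rewrite L1 L2.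
Qed.

Lemma g3_lt x y : g3 x y < 3.
Proof. rewrite /g3; case: (_ == _); case: (_ == _) => //. Qed.

Lemma nb_inj x y y' : adj x y -> adj x y' -> y.2 = x.2 -> y'.2 = x.2 ->
  g3 x y = g3 x y' -> dir x y = dir x y' -> y = y'.
Proof.
move=> a1 a2 E1 E2.
have H1 := same_label_nb a1 E1; have H2 := same_label_nb a2 E2.
move=> G Dr.
have [ex [ey ez]] : cx y.1 = cx y'.1 /\ cy y.1 = cy y'.1 /\ cz y.1 = cz y'.1.
  move: G Dr; rewrite /g3 /dir.
  case: H1 => -[]; rewrite /dif; case: H2 => -[]; rewrite /dif; gen2; lia.
case: y ex ey ez E1 {a1 H1 G Dr} => u l ex ey ez E1; case: y' ex ey ez E2 {a2 H2} => u' l' ex ey ez E2.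
have -> : u = u' by exact: eq_grid.
by move: E1 E2 => /= -> ->.
Qed.

Lemma diff_label_nb x y : adj x y -> y.2 != x.2 -> y.1 = x.1 /\
  ((x.2 = None /\ exists i, y.2 = Some i /\ in_box B i x.1) \/ (exists i, x.2 = Some i /\ y.2 = None)).
Proof.
move=> exy; have [vx vy H] := edge_cases exy.
case: H => [[E _ _ _ _]|[E _ _ _ _]|[E _ _ _ _]|[i [E [[L1 L2]|[L1 L2]] _]]];
  rewrite ?E ?eqxx //.
- move=> _; split => //; left; split => //; exists i; split => //.
  by move: vy; rewrite /tvalid L2 -E.
- by move=> _; split => //; right; exists i.
Qed.

Lemma nl_bound x : tvalid B x ->
  #|[set y | adj x y] :\: [set y : V | y.2 == x.2]| <= omega B.
Proof.
move=> vx; case E: x.2 => [i|].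
- apply: leq_trans (omega_ge x.1).
  apply: (@leq_trans 1).
    rewrite -(cards1 ((x.1, None) : V)); apply: subset_leq_card; apply/subsetP => y.
    rewrite !inE => /andP[ny ay]; have {}ny : y.2 != x.2 by rewrite E.
  have [E1 [[E2 _]|[j [E2 E3]]]] := diff_label_nb ay ny.
      by rewrite E in E2.
    by case: y E1 E3 {ay ny} => u l /= -> ->.
  rewrite card_gt0; apply/set0Pn; exists i; rewrite inE.
  by move: vx; rewrite /tvalid E.
- apply: leq_trans (omega_ge x.1).
  apply: leq_trans (leq_imset_card (fun j => (x.1, Some j) : V) _).
  apply: subset_leq_card; apply/subsetP => y.
  rewrite !inE => /andP[ny ay]; have {}ny : y.2 != x.2 by rewrite E.
  have [E1 [[E2 [j [E3 hj]]]|[j [E2 _]]]] := diff_label_nb ay ny;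
    last by rewrite E in E2.
  apply/imsetP; exists j; first by rewrite inE.
  by case: y E1 E3 {ay ny} => u l /= -> ->.
Qed.

Lemma deg_bound x : tvalid B x -> degree adj x <= omega B + 6.
Proof.
move=> vx; rewrite /degree.
set N := [set y | adj x y]; set L := [set y : V | y.2 == x.2].
rewrite -(cardsID L N).
have A : #|N :&: L| <= 6.
  pose f := fun y : V => ((inord (g3 x y) : 'I_3), dir x y).
  have inj : {in N :&: L &, injective f}.
    move=> y y'; rewrite !inE => /andP[ay ey] /andP[ay' ey'] [/(congr1 val)].
    rewrite /= !inordK ?g3_lt // => G Dr.
    exact: nb_inj ay ay' (eqP ey) (eqP ey') G Dr.
  rewrite -(card_in_imset inj); apply: leq_trans (max_card _) _.
  by rewrite card_prod card_ord card_bool.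
have := nl_bound vx; rewrite -/N -/L; lia.
Qed.

Lemma dir_out x y : 1 <= k1 -> 1 <= k2 -> adj x y -> y.2 = x.2 ->
  gdist adj x alpha < gdist adj y alpha -> dir x y.
Proof.
move=> h1 h2 exy E; have [vx vy _] := edge_cases exy.
rewrite !gdist_D // !D_alpha E /dir; lia.
Qed.

Lemma out_bound x : 1 <= k1 -> 1 <= k2 -> tvalid B x ->
  out_degree adj alpha x <= omega B + 3.
Proof.
move=> h1 h2 vx; rewrite /out_degree.
set S := [set y | _]; set L := [set y : V | y.2 == x.2].
rewrite -(cardsID L S).
have A : #|S :&: L| <= 3.
  pose f := fun y : V => (inord (g3 x y) : 'I_3).
  have inj : {in S :&: L &, injective f}.
    move=> y y'; rewrite !inE => /andP[/andP[ay dy] ey] /andP[/andP[ay' dy'] ey'] /(congr1 val).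
    rewrite /f /= !inordK ?g3_lt // => G.
    have D1 := dir_out h1 h2 ay (eqP ey) dy; have D2 := dir_out h1 h2 ay' (eqP ey') dy'.
    exact: nb_inj ay ay' (eqP ey) (eqP ey') G (etrans D1 (esym D2)).
  rewrite -(card_in_imset inj); apply: leq_trans (max_card _) _.
  by rewrite card_ord.
have Bd : #|S :\: L| <= omega B.
  apply: leq_trans (nl_bound vx); apply: subset_leq_card; apply: setSD.
  by apply/subsetP => y; rewrite !inE => /andP[].
lia.
Qed.

Definition tf (kk : option 'I_m * (nat * nat)) : 'I_3 + 'I_m :=
  if kk.1 is Some i then inr i else inl (inord kk.2.1).

Definition typ (A : {set V * V}) : 'I_3 + 'I_m :=
  tf (ekey (odflt (alpha, alpha) [pick f in A])).

Lemma typ_class e : 1 <= k1 -> 1 <= k2 -> is_edge adj e ->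
  typ (theta_class adj e) = tf (ekey e).
Proof.
move=> h1 h2 ee; rewrite /typ; case: pickP => [f|/(_ e)]; rewrite mem_class //.
  by case/andP => _ /eqP ->.
by rewrite ee eqxx.
Qed.

Lemma class_eq e e' : 1 <= k1 -> 1 <= k2 -> is_edge adj e -> is_edge adj e' ->
  ekey e = ekey e' -> theta_class adj e = theta_class adj e'.
Proof. by move=> h1 h2 ee ee' E; apply/setP => f; rewrite !mem_class // E. Qed.

Lemma class_key e f : 1 <= k1 -> 1 <= k2 -> is_edge adj e -> f \in theta_class adj e ->
  is_edge adj f /\ ekey f = ekey e.
Proof. by move=> h1 h2 ee; rewrite mem_class // => /andP[-> /eqP]. Qed.

Lemma ekey_wf' e : is_edge adj e -> ((ekey e).1 = None -> (ekey e).2.1 < 3) /\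
  (forall i, (ekey e).1 = Some i -> (ekey e).2 = (0, 0)).
Proof. by case: e => x y; apply: ekey_wf. Qed.

Lemma adj_level eA eB k t t' : 1 <= k1 -> 1 <= k2 -> is_edge adj eA -> is_edge adj eB ->
  ekey eA = (None, (k, t)) -> ekey eB = (None, (k, t')) -> t != t' ->
  ~ contact_adj adj alpha (theta_class adj eA) (theta_class adj eB).
Proof.
move=> h1 h2 ea eb KA KB ne.
case=> [[v0 [v1 [v2 [v3 [cyc i01 i23 i12 i30]]]]]|[e [f [/andP[eA' fB] de df Eef _]]]].
- have [e01 K01] := class_key h1 h2 ea i01.
  have [e12 K12] := class_key h1 h2 eb i12.
  have [e30 K30] := class_key h1 h2 eb i30.
  rewrite KA in K01; rewrite KB in K12 K30.
  have [_ H01] := key_level e01 K01; have [_ H12] := key_level e12 K12.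
  have [_ H30] := key_level e30 K30.
  move: H01 H12 H30 ne => /=; move: (co k v0.1) (co k v1.1) (co k v2.1) (co k v3.1); lia.
- have [ee Ke] := class_key h1 h2 ea eA'; have [ef Kf] := class_key h1 h2 eb fB.
  rewrite KA in Ke; rewrite KB in Kf.
  have := key_level_dir h1 h2 ee de Ke; have := key_level_dir h1 h2 ef df Kf.
  rewrite Eef; move: ne; lia.
Qed.

Lemma lab_contra (a b c d : option 'I_m) i j : i != j ->
  (a = None /\ b = Some i \/ a = Some i /\ b = None) ->
  (b = None /\ c = Some j \/ b = Some j /\ c = None) ->
  (d = None /\ a = Some j \/ d = Some j /\ a = None) -> False.
Proof.
move=> ne [[-> ->]|[-> ->]] [[E1 _]|[E1 _]] [[_ E2]|[_ E2]] //;
  move: ne; (try case: E1 => ->); (try case: E2 => ->); by rewrite eqxx.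
Qed.

Lemma adj_box eA eB i j : 1 <= k1 -> 1 <= k2 -> is_edge adj eA -> is_edge adj eB ->
  (ekey eA).1 = Some i -> (ekey eB).1 = Some j -> i != j ->
  contact_adj adj alpha (theta_class adj eA) (theta_class adj eB) -> boxes_meet B i j.
Proof.
move=> h1 h2 ea eb KA KB ne.
case=> [[v0 [v1 [v2 [v3 [cyc i01 i23 i12 i30]]]]]|[e [f [/andP[eA' fB] de df Eef _]]]].
- have [e01 K01] := class_key h1 h2 ea i01.
  have [e12 K12] := class_key h1 h2 eb i12.
  have [e30 K30] := class_key h1 h2 eb i30.
  have KB' := KB; rewrite -K01 in KA; rewrite -K12 in KB; rewrite -K30 in KB'.
  have [_ H01] := key_box e01 KA; have [_ H12] := key_box e12 KB.
  have [_ H30] := key_box e30 KB'.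
  by case: (lab_contra ne H01 H12 H30).
- have [ee Ke] := class_key h1 h2 ea eA'; have [ef Kf] := class_key h1 h2 eb fB.
  rewrite -Ke in KA; rewrite -Kf in KB.
  have [E1 L1 L2] := key_box_dir h1 h2 ee de KA.
  have [E1' L1' L2'] := key_box_dir h1 h2 ef df KB.
  have [_ vy _] := edge_cases ee; have [_ vy' _] := edge_cases ef.
  move: vy vy'; rewrite /tvalid L2 L2' -E1 -E1' Eef.
  rewrite /boxes_meet /intervals_meet /in_box; lia.
Qed.

Lemma clique_bound (C : {set {set V * V}}) : 1 <= k1 -> 1 <= k2 -> boxes_ok k1 k2 k3 B ->
  contact_clique adj alpha C -> #|C| <= omega B + 3.
Proof.
move=> h1 h2 ok [Hcl Hadj].
have inj : {in C &, injective typ}.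
  move=> A A' AC A'C.
  have [eA ea EA] := Hcl A AC; have [eB eb EB] := Hcl A' A'C.
  rewrite EA EB in AC A'C *; rewrite !typ_class //.
  case: (eqVneq (ekey eA) (ekey eB)) => [E _|ne]; first exact: class_eq.
  move=> T; exfalso.
  have AB : theta_class adj eA != theta_class adj eB.
    apply/eqP => E; apply: (elimN eqP ne).
    have : eA \in theta_class adj eA by rewrite mem_class // ea eqxx.
    by rewrite E => /(class_key h1 h2 eb) [_ ->].
  have HC := Hadj _ _ AC A'C AB.
  have [wA1 wA2] := ekey_wf' ea; have [wB1 wB2] := ekey_wf' eb.
  move: T ne.
  case KA: (ekey eA) => [[i|] [ka ta]]; case KB: (ekey eB) => [[j|] [kb tb]]; rewrite /tf //= => T ne.
  - case: T => Eij; subst j.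
    have := wA2 i; rewrite KA => /(_ erefl) [Ek Et].
    have := wB2 i; rewrite KB => /(_ erefl) [Ek' Et'].
    by rewrite Ek Et Ek' Et' eqxx in ne.
  - have ka3 : ka < 3 by move: wA1; rewrite KA => /(_ erefl).
    have kb3 : kb < 3 by move: wB1; rewrite KB => /(_ erefl).
    case: T => /(congr1 val) /=; rewrite !inordK // => Ek; subst kb.
    have ntt : ta != tb by apply: contraNneq ne => ->.
    exact: adj_level h1 h2 ea eb KA KB ntt HC.
have typ_box : forall A i, A \in C -> typ A = inr i ->
    exists2 e, is_edge adj e & A = theta_class adj e /\ (ekey e).1 = Some i.
  move=> A i AC TA; have [e ee EA] := Hcl A AC; exists e => //; split => //.
  move: TA; rewrite EA typ_class // /tf; case: (ekey e) => [[i'|] ?] //= [->] //.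
set Sb := [set i | inr i \in typ @: C].
have Sbm : #|Sb| <= omega B.
  rewrite /omega; apply: (leq_bigmax_cond (F := fun S : {set 'I_m} => #|S|)).
  apply/forallP => i; apply/implyP; rewrite inE => /imsetP[A AC TA].
  apply/forallP => j; apply/implyP; rewrite inE => /imsetP[A' A'C TA'].
  case: (eqVneq i j) => [<-|ne].
    have [ha hb hc] := ok i; rewrite /boxes_meet /intervals_meet; lia.
  have [eA ea [EA KA]] := typ_box A i AC (esym TA).
  have [eB eb [EB KB]] := typ_box A' j A'C (esym TA').
  have AB : A != A'.
    by apply/eqP => E; move: TA TA'; rewrite E => <- [] E'; rewrite E' eqxx in ne.
  have HC := Hadj _ _ AC A'C AB; rewrite EA EB in HC.
  exact: adj_box h1 h2 ea eb KA KB ne HC.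
rewrite -(card_in_imset inj).
have sub : typ @: C \subset ((@inl 'I_3 'I_m) @: [set: 'I_3]) :|: ((@inr 'I_3 'I_m) @: Sb).
  apply/subsetP => x xT; rewrite inE; case: x xT => [k|i] xT; apply/orP.
    by left; apply/imsetP; exists k; rewrite ?inE.
  by right; apply/imsetP; exists i; rewrite ?inE.
apply: leq_trans (subset_leq_card sub) _.
rewrite cardsU.
have := leq_imset_card (@inl 'I_3 'I_m) [set: 'I_3]; rewrite cardsT card_ord.
have := leq_imset_card (@inr 'I_3 'I_m) Sb.
move=> h3 h4; apply: leq_trans (leq_subr _ _) _.
by rewrite addnC; apply: leq_add (leq_trans h3 Sbm) h4.
Qed.
End H.

Theorem lemma4 (k1 k2 k3 m : nat) (B : boxes m) :
  1 <= k1 -> 1 <= k2 -> 1 <= k3 -> boxes_ok k1 k2 k3 B ->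
  let adj := @tadj k1 k2 k3 m B in
  let alpha := alpha0 k1 k2 k3 m in
  [/\ (forall x, tvalid B x -> out_degree adj alpha x <= omega B + 3),
      (forall x, tvalid B x -> degree adj x <= omega B + 6) &
      (forall C : {set {set tV k1 k2 k3 m * tV k1 k2 k3 m}},
          contact_clique adj alpha C -> #|C| <= omega B + 3)].
Proof.
move=> h1 h2 h3 ok adj alpha; split.
- by move=> x vx; apply: out_bound.
- by move=> x vx; apply: deg_bound.
- by move=> C; apply: clique_bound.
Qed.
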